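(* Let $(X,f)$ be a dynamical system. If $(X,f)$ is $\Delta$-transitive with respect to $(1,2)$, then $(X,f)$ is weakly mixing.
   Context: A dynamical system is a pair $(X,f)$ with $X$ a compact metric space and $f:X\to X$ continuous. For a system $(Y,g)$, a point $y$ is a transitive point if its $\omega$-limit set equals $Y$; $(Y,g)$ is transitive if for all non-empty open $U,V\subset Y$ there is $n\in\mathbb{N}$ with $U\cap g^{-n}(V)\neq\emptyset$. $(X,f)$ is weakly mixing if $(X\times X,f\times f)$ is transitive. $(X,f)$ is $\Delta$-transitive with respect to $(1,2)$ if there is $x\in X$ such that $(x,x)$ is a transitive point of $(X\times X,f\times f^2)$. *)

(* Defs.v *)
From Stdlib Require Import Reals Lra Rlimit.
Open Scope R_scope.

Definition ball (M : Metric_Space) (x : Base M) (r : R) : Base M -> Prop :=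
  fun y => dist M x y < r.

Definition is_open (M : Metric_Space) (U : Base M -> Prop) : Prop :=
  forall x, U x -> exists r, 0 < r /\ forall y, ball M x r y -> U y.

Definition compact_space (M : Metric_Space) : Prop :=
  forall (I : Type) (U : I -> Base M -> Prop),
    (forall i, is_open M (U i)) ->
    (forall x, exists i, U i x) ->
    exists l : list I, forall x, exists i, List.In i l /\ U i x.

Definition continuous_map (M : Metric_Space) (f : Base M -> Base M) : Prop :=
  forall x eps, 0 < eps -> exists delta, 0 < delta /\
    forall y, dist M x y < delta -> dist M (f x) (f y) < eps.

Definition dynamical_system (M : Metric_Space) (f : Base M -> Base M) : Prop :=
  compact_space M /\ continuous_map M f.

Definition iter {A : Type} (n : nat) (g : A -> A) (x : A) : A := Nat.iter n g x.

Definition omega_limit (M : Metric_Space) (g : Base M -> Base M) (y : Base M)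
  : Base M -> Prop :=
  fun z => forall eps (N : nat), 0 < eps ->
    exists n : nat, (N <= n)%nat /\ dist M (iter n g y) z < eps.

Definition transitive_point (M : Metric_Space) (g : Base M -> Base M) (y : Base M)
  : Prop := forall z, omega_limit M g y z.

Definition transitive (M : Metric_Space) (g : Base M -> Base M) : Prop :=
  forall U V : Base M -> Prop, is_open M U -> is_open M V ->
    (exists u, U u) -> (exists v, V v) ->
    exists n : nat, (1 <= n)%nat /\ exists x, U x /\ V (iter n g x).

(** The product metric space X x X with the max metric (which induces the
    product topology). *)
Definition prod_dist (M : Metric_Space) (p q : Base M * Base M) : R :=
  Rmax (dist M (fst p) (fst q)) (dist M (snd p) (snd q)).

Lemma prod_dist_pos (M : Metric_Space) :
  forall p q, prod_dist M p q >= 0.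
Proof.
  intros p q; unfold prod_dist.
  pose proof (dist_pos M (fst p) (fst q)).
  pose proof (Rmax_l (dist M (fst p) (fst q)) (dist M (snd p) (snd q))). lra.
Qed.

Lemma prod_dist_sym (M : Metric_Space) :
  forall p q, prod_dist M p q = prod_dist M q p.
Proof.
  intros p q; unfold prod_dist; rewrite (dist_sym M (fst p)), (dist_sym M (snd p)).
  reflexivity.
Qed.

Lemma prod_dist_refl (M : Metric_Space) :
  forall p q, prod_dist M p q = 0 <-> p = q.
Proof.
  intros [a b] [c d]; unfold prod_dist; simpl; split.
  - intro H.
    pose proof (dist_pos M a c). pose proof (dist_pos M b d).
    pose proof (Rmax_l (dist M a c) (dist M b d)).
    pose proof (Rmax_r (dist M a c) (dist M b d)).
    assert (E1 : dist M a c = 0) by lra. assert (E2 : dist M b d = 0) by lra.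
    apply (dist_refl M) in E1; apply (dist_refl M) in E2; subst; reflexivity.
  - intro H; inversion H; subst.
    rewrite (proj2 (dist_refl M c c) eq_refl), (proj2 (dist_refl M d d) eq_refl).
    unfold Rmax; destruct (Rle_dec 0 0); reflexivity.
Qed.

Lemma prod_dist_tri (M : Metric_Space) :
  forall p q r, prod_dist M p q <= prod_dist M p r + prod_dist M r q.
Proof.
  intros [a b] [c d] [e g]; unfold prod_dist; simpl.
  pose proof (dist_tri M a c e). pose proof (dist_tri M b d g).
  pose proof (Rmax_l (dist M a e) (dist M b g)). pose proof (Rmax_r (dist M a e) (dist M b g)).
  pose proof (Rmax_l (dist M e c) (dist M g d)). pose proof (Rmax_r (dist M e c) (dist M g d)).
  apply Rmax_lub; lra.
Qed.

Definition prod_space (M : Metric_Space) : Metric_Space :=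
  Build_Metric_Space (Base M * Base M) (prod_dist M)
    (prod_dist_pos M) (prod_dist_sym M) (prod_dist_refl M) (prod_dist_tri M).

Definition prod_map {A : Type} (g1 g2 : A -> A) : A * A -> A * A :=
  fun p => (g1 (fst p), g2 (snd p)).

Definition weakly_mixing (M : Metric_Space) (f : Base M -> Base M) : Prop :=
  transitive (prod_space M) (prod_map f f).

Definition delta_transitive_12 (M : Metric_Space) (f : Base M -> Base M) : Prop :=
  exists x : Base M,
    transitive_point (prod_space M) (prod_map f (iter 2 f)) (x, x).

(* Main.v *)
Require Import Defs.
From Stdlib Require Import Reals Rlimit Lra Lia.
Open Scope R_scope.

Lemma iter_add_ {A} (g : A -> A) a b x : iter (a + b) g x = iter a g (iter b g x).
Proof. unfold iter; induction a as [|a IH]; simpl; [reflexivity| now rewrite IH]. Qed.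

Lemma iter_comm {A} (g : A -> A) a b x : iter a g (iter b g x) = iter b g (iter a g x).
Proof. rewrite <- !iter_add_. f_equal. lia. Qed.

Lemma iter_prod {A} (f g : A -> A) n p :
  iter n (prod_map f g) p = (iter n f (fst p), iter n g (snd p)).
Proof.
  induction n as [|n IH]; [destruct p; reflexivity|].
  change (iter (S n) (prod_map f g) p) with (prod_map f g (iter n (prod_map f g) p)).
  rewrite IH. reflexivity.
Qed.

Lemma iter2 {A} (f : A -> A) n x : iter n (iter 2 f) x = iter (2 * n) f x.
Proof.
  induction n as [|n IH]; [reflexivity|].
  change (iter (S n) (iter 2 f) x) with (iter 2 f (iter n (iter 2 f) x)).
  rewrite IH, <- iter_add_. f_equal. lia.
Qed.

Lemma cont_iter M f k : continuous_map M f -> continuous_map M (iter k f).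
Proof.
  intros Hc. induction k as [|k IH]; intros x eps He.
  - exists eps. split; [exact He|]. intros y Hy. exact Hy.
  - destruct (Hc (iter k f x) eps He) as [d1 [Hd1 H1]].
    destruct (IH x d1 Hd1) as [d2 [Hd2 H2]].
    exists d2. split; [exact Hd2|]. intros y Hy.
    change (dist M (f (iter k f x)) (f (iter k f y)) < eps). auto.
Qed.

Lemma open_pre M (U : Base M -> Prop) g :
  is_open M U -> continuous_map M g -> is_open M (fun y => U (g y)).
Proof.
  intros HU Hg x Hx. destruct (HU _ Hx) as [r [Hr H]].
  destruct (Hg x r Hr) as [d [Hd H2]]. exists d. split; [exact Hd|].
  intros y Hy. apply H. unfold ball. apply H2. exact Hy.
Qed.

Lemma open_inter M (U V : Base M -> Prop) :
  is_open M U -> is_open M V -> is_open M (fun y => U y /\ V y).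
Proof.
  intros HU HV x [Hx1 Hx2]. destruct (HU _ Hx1) as [r1 [Hr1 H1]].
  destruct (HV _ Hx2) as [r2 [Hr2 H2]]. exists (Rmin r1 r2).
  split; [apply Rmin_pos; assumption|]. intros y Hy; unfold ball in Hy.
  pose proof (Rmin_l r1 r2); pose proof (Rmin_r r1 r2).
  split; [apply H1 | apply H2]; unfold ball; lra.
Qed.

Lemma open_true M : is_open M (fun _ => True).
Proof. intros x _. exists 1. split; [lra| auto]. Qed.

Lemma ball_open M c r : is_open M (ball M c r).
Proof.
  intros y Hy. unfold ball in *. exists (r - dist M c y). split; [lra|].
  intros z Hz. unfold ball in Hz. pose proof (dist_tri M c z y). lra.
Qed.

Lemma ball_center M c r : 0 < r -> ball M c r c.
Proof. intros. unfold ball. rewrite (proj2 (dist_refl M c c) eq_refl). lra. Qed.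

Lemma pair_visit M f x (A B : Base M -> Prop) :
  transitive_point (prod_space M) (prod_map f (iter 2 f)) (x, x) ->
  is_open M A -> is_open M B -> (exists a, A a) -> (exists b, B b) ->
  forall N, exists j, (N <= j)%nat /\ A (iter j f x) /\ B (iter (2*j) f x).
Proof.
  intros Ht HA HB [a Ha] [b Hb] N.
  destruct (HA a Ha) as [r1 [Hr1 H1]].
  destruct (HB b Hb) as [r2 [Hr2 H2]].
  destruct (Ht (a,b) (Rmin r1 r2) N (Rmin_pos _ _ Hr1 Hr2)) as [j [Hj Hd]].
  exists j. split; [exact Hj|].
  change (prod_dist M (iter j (prod_map f (iter 2 f)) (x,x)) (a,b) < Rmin r1 r2) in Hd.
  rewrite iter_prod in Hd. unfold prod_dist in Hd. simpl in Hd. rewrite iter2 in Hd.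
  change (Rmax (dist M (iter j f x) a) (dist M (iter (2*j) f x) b) < Rmin r1 r2) in Hd.
  pose proof (Rmax_l (dist M (iter j f x) a) (dist M (iter (2*j) f x) b)).
  pose proof (Rmax_r (dist M (iter j f x) a) (dist M (iter (2*j) f x) b)).
  pose proof (Rmin_l r1 r2); pose proof (Rmin_r r1 r2).
  split; [apply H1 | apply H2]; unfold ball; rewrite dist_sym; lra.
Qed.

Theorem lemma5p4 (M : Metric_Space) (f : Base M -> Base M) :
  dynamical_system M f ->
  delta_transitive_12 M f ->
  weakly_mixing M f.
Proof.
  intros [_ Hc] [x Ht]. unfold weakly_mixing, transitive.
  intros U V HU HV [u Hu] [v Hv].
  destruct (HU u Hu) as [ru [Hru HUb]]. destruct (HV v Hv) as [rv [Hrv HVb]].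
  set (U1 := ball M (fst u) ru). set (U2 := ball M (snd u) ru).
  set (V1 := ball M (fst v) rv). set (V2 := ball M (snd v) rv).
  assert (BoxU : forall a b, U1 a -> U2 b -> U (a, b)).
  { intros a b Ha Hb. apply HUb. unfold ball. simpl. unfold prod_dist.
    apply Rmax_lub_lt; assumption. }
  assert (BoxV : forall a b, V1 a -> V2 b -> V (a, b)).
  { intros a b Ha Hb. apply HVb. unfold ball. simpl. unfold prod_dist.
    apply Rmax_lub_lt; assumption. }
  assert (oU1 : is_open M U1) by apply ball_open.
  assert (oU2 : is_open M U2) by apply ball_open.
  assert (oV1 : is_open M V1) by apply ball_open.
  assert (oV2 : is_open M V2) by apply ball_open.
  assert (nU1 : exists a, U1 a) by (exists (fst u); apply ball_center; lra).
  assert (nU2 : exists a, U2 a) by (exists (snd u); apply ball_center; lra).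
  assert (nV1 : exists a, V1 a) by (exists (fst v); apply ball_center; lra).
  assert (nV2 : exists a, V2 a) by (exists (snd v); apply ball_center; lra).
  assert (nT : exists a : Base M, True) by (exists x; exact I).
  pose proof (open_true M) as oT.
  destruct (pair_visit M f x U1 _ Ht oU1 oT nU1 nT 0) as [p [_ [Hp _]]].
  destruct (pair_visit M f x U2 _ Ht oU2 oT nU2 nT p) as [q [Hpq [Hq _]]].
  set (d := (q - p)%nat).
  assert (Hd : iter d f (iter p f x) = iter q f x).
  { rewrite <- iter_add_. f_equal. unfold d. lia. }
  destruct (pair_visit M f x V1 _ Ht oV1 oT nV1 nT d) as [t [Hdt [Htv _]]].
  assert (O1o : is_open M (fun y => U1 y /\ U2 (iter d f y))).
  { apply open_inter; [exact oU1| apply open_pre; [exact oU2| apply cont_iter; exact Hc]]. }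
  assert (O1n : exists y, U1 y /\ U2 (iter d f y)).
  { exists (iter p f x). rewrite Hd. auto. }
  assert (O2o : is_open M (fun y => V1 (iter d f y))).
  { apply open_pre; [exact oV1| apply cont_iter; exact Hc]. }
  assert (O2n : exists y, V1 (iter d f y)).
  { exists (iter (t - d) f x). rewrite <- iter_add_.
    replace (d + (t - d))%nat with t by lia. exact Htv. }
  destruct (pair_visit M f x _ _ Ht O1o O2o O1n O2n 0) as [i [_ [[Hi1 Hi2] Hi3]]].
  assert (O3o : is_open M (fun y => U2 y /\ V1 (iter i f y))).
  { apply open_inter; [exact oU2| apply open_pre; [exact oV1| apply cont_iter; exact Hc]]. }
  assert (O3n : exists y, U2 y /\ V1 (iter i f y)).
  { exists (iter d f (iter i f x)). split; [exact Hi2|].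
    replace (iter i f (iter d f (iter i f x))) with (iter d f (iter (2 * i) f x));
      [exact Hi3|].
    rewrite <- !iter_add_. f_equal. lia. }
  destruct (pair_visit M f x _ _ Ht O3o oV2 O3n nV2 1) as [j [Hj [[Hj1 Hj2] Hj3]]].
  exists j. split; [exact Hj|].
  exists (iter i f x, iter j f x). split.
  - apply BoxU; assumption.
  - change (V (iter j (prod_map f f) (iter i f x, iter j f x))).
    rewrite iter_prod. simpl. apply BoxV.
    + rewrite iter_comm. exact Hj2.
    + rewrite <- iter_add_. replace (j + j)%nat with (2 * j)%nat by lia. exact Hj3.
Qed.
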